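(* Let $M=V^TV$ be an $n\times n$ positive semidefinite matrix of rank $d$, where $V\in\mathbb{R}^{d\times n}$ has columns $v_1,\dots,v_n$, and let $1\le j\le d$. Let $\mu$ be the optimal value (infimum) of the program \[ \text{minimize } \Delta_j(W)\quad\text{s.t. } v_i^TWv_i\le 1\ \ \forall 1\le i\le n,\quad W\succ 0 \] over $d\times d$ symmetric matrices $W$. Then $\mathrm{msd}_j(M)\le e^{\mu}$.
   Context: For a $d\times d$ matrix $W\succ 0$, $\Delta_j(W)\coloneqq-\sum_{i=1}^j\ln\lambda_i$, where $\lambda_1\le\dots\le\lambda_d$ are the eigenvalues of $W$ (minus the sum of logarithms of the $j$ smallest eigenvalues). $\mathrm{msd}_j(M)\coloneqq\max\{\det(M_{S,S}): S\subseteq[n],\ |S|=j\}$. *)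

(* Defs.v *)
From HB Require Import structures.
From Stdlib Require Import Reals ClassicalEpsilon FunctionalExtensionality.
From mathcomp Require Import all_boot all_order all_algebra.

Set Implicit Arguments.
Unset Strict Implicit.
Unset Printing Implicit Defensive.

HB.instance Definition _ := hasDecEq.Build R (compareP Req_EM_T).

Definition R_find (P : pred R) (n : nat) : option R :=
  match excluded_middle_informative (exists x, P x) with
  | left h => Some (proj1_sig (constructive_indefinite_description _ h))
  | right _ => None
  end.

Lemma R_find_correct (P : pred R) n x : R_find P n = Some x -> P x.
Proof.
rewrite /R_find; case: excluded_middle_informative => // h [<-].
exact: proj2_sig (constructive_indefinite_description _ h).
Qed.

Lemma R_find_complete (P : pred R) : (exists x, P x) -> exists n, R_find P n.
Proof.
move=> h; exists 0%N; rewrite /R_find.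
by case: excluded_middle_informative.
Qed.

Lemma R_find_ext (P Q : pred R) : P =1 Q -> R_find P =1 R_find Q.
Proof.
move=> PQ n; have -> : P = Q by apply: functional_extensionality.
by [].
Qed.

HB.instance Definition _ := hasChoice.Build R R_find_correct R_find_complete R_find_ext.

Lemma R_addA : associative Rplus. Proof. by move=> *; rewrite Rplus_assoc. Qed.
Lemma R_addC : commutative Rplus. Proof. exact: Rplus_comm. Qed.
Lemma R_add0 : left_id R0 Rplus. Proof. exact: Rplus_0_l. Qed.
Lemma R_addN : left_inverse R0 Ropp Rplus. Proof. exact: Rplus_opp_l. Qed.

HB.instance Definition _ := GRing.isZmodule.Build R R_addA R_addC R_add0 R_addN.

Lemma R_mulA : associative Rmult. Proof. by move=> *; rewrite Rmult_assoc. Qed.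
Lemma R_mulC : commutative Rmult. Proof. exact: Rmult_comm. Qed.
Lemma R_mul1 : left_id R1 Rmult. Proof. exact: Rmult_1_l. Qed.
Lemma R_mulDl : left_distributive Rmult Rplus. Proof. exact: Rmult_plus_distr_r. Qed.
Lemma R_oner_neq0 : R1 != R0. Proof. by apply/eqP; exact: R1_neq_R0. Qed.

HB.instance Definition _ :=
  GRing.Zmodule_isComNzRing.Build R R_mulA R_mulC R_mul1 R_mulDl R_oner_neq0.

Lemma R_mulVf (x : R) : x != R0 -> Rmult (Rinv x) x = R1.
Proof. by move/eqP=> h; exact: Rinv_l. Qed.

HB.instance Definition _ := GRing.ComNzRing_isField.Build R R_mulVf Rinv_0.

Local Open Scope ring_scope.

Definition Rleb (x y : R) : bool := if Rle_dec x y then true else false.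

Definition posdef (d : nat) (W : 'M[R]_d) : Prop :=
  W^T = W /\ forall x : 'cV[R]_d, x != 0 -> Rlt 0 ((x^T *m W *m x) 0 0).

Definition sorted_eigenvalues (d : nat) (W : 'M[R]_d) (s : seq R) : Prop :=
  size s = d /\ sorted Rleb s /\ char_poly W = \prod_(x <- s) ('X - x%:P).

Definition Delta (j d : nat) (W : 'M[R]_d) (x : R) : Prop :=
  exists s : seq R, sorted_eigenvalues W s /\
    x = Ropp (\sum_(i < j) ln (nth 0 s i)).

Definition principal_submx (n : nat) (M : 'M[R]_n) (S : {set 'I_n}) :
  'M[R]_#|S| := mxsub (@enum_val _ (mem S)) (@enum_val _ (mem S)) M.

(* msd_j(M) = max { det M_{S,S} : S subset of [n], |S| = j }
   (the default value 0 of the iterated max is only used when no such S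
   exists, which never happens under the hypotheses j <= d <= n) *)
Definition msd (j n : nat) (M : 'M[R]_n) : R :=
  \big[Rmax/0]_(S : {set 'I_n} | #|S| == j) \det (principal_submx M S).

Definition objective_values (j d n : nat) (V : 'M[R]_(d, n)) (x : R) : Prop :=
  exists W : 'M[R]_d, posdef W /\
    (forall i : 'I_n, Rle (((col i V)^T *m W *m col i V) 0 0) 1) /\
    Delta j W x.

Definition is_inf (E : R -> Prop) (m : R) : Prop :=
  (forall x, E x -> Rle m x) /\ (forall b, (forall x, E x -> Rle b x) -> Rle b m).

(* Main.v *)
Require Import Defs.
From HB Require Import structures.
From Stdlib Require Import Reals Lra.
From mathcomp Require Import all_boot all_order all_algebra.
Import GRing.Theory.
Local Open Scope ring_scope.

Set Implicit Arguments.
Unset Strict Implicit.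
Unset Printing Implicit Defensive.

Lemma addRE (x y : R) : (x + y)%R = Rplus x y. Proof. by []. Qed.
Lemma mulRE (x y : R) : (x * y)%R = Rmult x y. Proof. by []. Qed.
Lemma oppRE (x : R) : (- x)%R = Ropp x. Proof. by []. Qed.
Lemma zeroRE : (0 : R) = R0. Proof. by []. Qed.
Lemma oneRE : (1 : R) = R1. Proof. by []. Qed.
Ltac rR := repeat match goal with
 | |- context [@GRing.one ?T] => change (@GRing.one T) with R1
 | |- context [@Algebra.zero ?T] => change (@Algebra.zero T) with R0
 | |- context [@Algebra.add ?T ?x ?y] => change (@Algebra.add T x y) with (Rplus x y)
 | |- context [@GRing.mul ?T ?x ?y] => change (@GRing.mul T x y) with (Rmult x y)
 | |- context [@Algebra.opp ?T ?x] => change (@Algebra.opp T x) with (Ropp x)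
 | |- context [@GRing.inv ?T ?x] => change (@GRing.inv T x) with (Rinv x)
 end.

Lemma sumR_ge0 (I : Type) (r : seq I) (P : pred I) (F : I -> R) :
  (forall i, P i -> Rle 0 (F i)) -> Rle 0 (\sum_(i <- r | P i) F i).
Proof.
move=> h; apply: (big_ind (fun x : R => Rle 0 x)) => //.
- exact: Rle_refl.
- move=> x y hx hy; rR; lra.
Qed.

Lemma sumR_le (I : Type) (r : seq I) (P : pred I) (F G : I -> R) :
  (forall i, P i -> Rle (F i) (G i)) ->
  Rle (\sum_(i <- r | P i) F i) (\sum_(i <- r | P i) G i).
Proof.
move=> h; apply: (big_ind2 (fun x y : R => Rle x y)) => //.
- exact: Rle_refl.
- move=> x1 x2 y1 y2 h1 h2; rR; lra.
Qed.

Lemma prodR_le (I : Type) (r : seq I) (P : pred I) (F G : I -> R) :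
  (forall i, P i -> Rle 0 (F i) /\ Rle (F i) (G i)) ->
  Rle 0 (\prod_(i <- r | P i) F i) /\
  Rle (\prod_(i <- r | P i) F i) (\prod_(i <- r | P i) G i).
Proof.
move=> h; apply: (big_ind2 (fun x y : R => Rle 0 x /\ Rle x y)) => //.
- rR; split; lra.
- move=> x1 x2 y1 y2 [h1 h1'] [h2 h2'] /=; rR; split; [nra|]. apply: Rmult_le_compat => //.
Qed.

Lemma prodR_gt0 (I : Type) (r : seq I) (P : pred I) (F : I -> R) :
  (forall i, P i -> Rlt 0 (F i)) -> Rlt 0 (\prod_(i <- r | P i) F i).
Proof.
move=> h; apply: (big_ind (fun x : R => Rlt 0 x)) => //.
- rR; lra.
- move=> x y hx hy; rR; nra.
Qed.

Definition qf d (A : 'M[R]_d) (x : 'cV[R]_d) : R := (x^T *m A *m x) 0 0.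

Lemma qf1E d (x : 'cV[R]_d) : (x^T *m x) 0 0 = \sum_i x i 0 * x i 0.
Proof. by rewrite mxE; apply: eq_bigr => i _; rewrite mxE. Qed.

Lemma sq_ge0 d (x : 'cV[R]_d) : Rle 0 ((x^T *m x) 0 0).
Proof. rewrite qf1E; apply: sumR_ge0 => i _; rR; nra. Qed.

Lemma sq_gt0 d (x : 'cV[R]_d) : x != 0 -> Rlt 0 ((x^T *m x) 0 0).
Proof.
move=> nz.
have [k hk] : exists k, x k 0 != 0.
  apply/existsP; apply: contraR nz; rewrite negb_exists => /forallP h.
  apply/eqP/matrixP => i j; rewrite (ord1 j) mxE; exact/eqP/negbNE/h.
rewrite qf1E (bigD1 k) //=.
set S := (X in (_ + X)%R).
have hs : Rle 0 S by apply: sumR_ge0 => i _; rR; nra.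
have : Rlt 0 (Rmult (x k 0) (x k 0)) by apply: Rsqr_pos_lt; apply/eqP.
move: hs; rR; lra.
Qed.

Lemma posdef1 d : posdef (1%:M : 'M[R]_d).
Proof. split; first exact: trmx1. by move=> x nz; rewrite mulmx1; exact: sq_gt0. Qed.

Lemma qf_ge0 d (A : 'M[R]_d) x : posdef A -> Rle 0 (qf A x).
Proof.
move=> [_ hA]; have [->|nz] := eqVneq x 0.
  by rewrite /qf mulmx0 mxE; exact: Rle_refl.
exact/Rlt_le/hA.
Qed.

Lemma qf_eq0 d (A : 'M[R]_d) x : posdef A -> qf A x = 0 -> x = 0.
Proof.
move=> [_ hA] h; apply/eqP; apply/negPn/negP => nz.
by have := hA x nz; rewrite -/(qf A x) h; apply: Rlt_irrefl.
Qed.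

Lemma det0_ker n (M : 'M[R]_n) : \det M = 0 -> exists x : 'cV[R]_n, x != 0 /\ M *m x = 0.
Proof.
rewrite -det_tr => /eqP /det0P [v nz hv]; exists v^T; split.
  by rewrite trmx_eq0.
by rewrite -[M]trmxK -trmx_mul hv trmx0.
Qed.

Lemma gram_sing d j (A : 'M[R]_d) (U : 'M[R]_(d, j)) (x : 'cV[R]_j) :
  x != 0 -> U *m x = 0 -> \det (U^T *m A *m U) = 0.
Proof.
move=> nz hx; apply/eqP; rewrite -det_tr; apply/det0P; exists x^T.
  by rewrite trmx_eq0.
by rewrite -trmx_mul -!mulmxA hx !mulmx0 trmx0.
Qed.

Lemma qf_mul d j (A : 'M[R]_d) (U : 'M[R]_(d, j)) (x : 'cV[R]_j) :
  qf A (U *m x) = qf (U^T *m A *m U) x.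
Proof. by rewrite /qf trmx_mul !mulmxA. Qed.

Lemma posdef_ker d j (A : 'M[R]_d) (U : 'M[R]_(d, j)) : posdef A ->
  \det (U^T *m A *m U) = 0 -> exists x : 'cV[R]_j, x != 0 /\ U *m x = 0.
Proof.
move=> hA /det0_ker [x [nz hx]]; exists x; split => //.
apply: (qf_eq0 hA); rewrite qf_mul /qf -mulmxA hx mulmx0 mxE //.
Qed.

Lemma schur_step d j (A : 'M[R]_d) (u : 'cV[R]_d) (U : 'M[R]_(d, j)) :
  A^T = A -> \det (U^T *m A *m U) != 0 ->
  exists x : 'cV[R]_j,
    \det ((row_mx u U)^T *m A *m row_mx u U) = qf A (u - U *m x) * \det (U^T *m A *m U)
    /\ qf A u = qf A (u - U *m x) + qf A (U *m x).
Proof.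
move=> hA hG; set G := U^T *m A *m U.
have Gu : G \in unitmx by rewrite unitmxE unitfE.
set x := invmx G *m (U^T *m A *m u); exists x.
set w : 'cV[R]_d := u - U *m x.
have hw : U^T *m A *m w = 0.
  rewrite /w mulmxBr /x !mulmxA -/G mulmxV // mul1mx subrr //.
have hw' : w^T *m A *m U = 0.
  by apply: trmx_inj; rewrite !trmx_mul !trmxK hA mulmxA hw trmx0.
pose Rm : 'M[R]_(1 + j) := block_mx 1%:M 0 (- x) 1%:M.
have hR : row_mx u U *m Rm = row_mx w U.
  by rewrite mul_row_block !mulmx1 mulmx0 add0r mulmxN.
have dR : \det Rm = 1 by rewrite det_lblock !det1 mulr1.
split.
  have -> : \det ((row_mx u U)^T *m A *m row_mx u U) =
            \det ((row_mx w U)^T *m A *m row_mx w U).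
    rewrite -hR trmx_mul.
    have -> : Rm^T *m (row_mx u U)^T *m A *m (row_mx u U *m Rm) =
      Rm^T *m ((row_mx u U)^T *m A *m row_mx u U) *m Rm by rewrite !mulmxA.
    by rewrite !det_mulmx det_tr dR mulr1 mul1r.
  rewrite tr_row_mx mul_col_mx mul_col_row hw hw' det_ublock det_mx11 //.
have e : qf A (w + U *m x) = qf A w + qf A (U *m x).
  rewrite /qf mulmxDr [(w + _)^T]linearD /= !mulmxDl.
  have -> : w^T *m A *m (U *m x) = 0 by rewrite mulmxA hw' mul0mx.
  have -> : (U *m x)^T *m A *m w = 0 by rewrite trmx_mul -!mulmxA (mulmxA U^T) hw mulmx0.
  by rewrite addr0 add0r mxE.
by rewrite -e /w subrK.
Qed.

Lemma gram_ge0 d (A : 'M[R]_d) : posdef A ->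
  forall j (U : 'M[R]_(d, j)), Rle 0 (\det (U^T *m A *m U)).
Proof.
move=> hA; elim=> [|j IH] U.
  rewrite det_mx00; rR; lra.
have -> : U = row_mx (lsubmx (U : 'M_(d, 1 + j))) (rsubmx (U : 'M_(d, 1 + j))) by rewrite hsubmxK.
set u := lsubmx _; set U' := rsubmx _.
have [h0|hn] := eqVneq (\det (U'^T *m A *m U')) 0.
  have [x [nz hx]] := posdef_ker hA h0.
  rewrite (@gram_sing d (1 + j) A (row_mx u U') (col_mx 0 x)).
  - rR; lra.
  - by rewrite col_mx_eq0 negb_and nz orbT.
  - by rewrite mul_row_col mulmx0 add0r hx.
have [x [-> _]] := schur_step u hA.1 hn.
have := qf_ge0 (u - U' *m x) hA; have := IH U'; rR; nra.
Qed.

Lemma fischer d j (A : 'M[R]_d) (c : 'cV[R]_d) (Z : 'M[R]_(d, j)) : posdef A ->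
  Rle (\det ((row_mx c Z)^T *m A *m row_mx c Z)) (qf A c * \det (Z^T *m A *m Z)).
Proof.
move=> hA; have [h0|hn] := eqVneq (\det (Z^T *m A *m Z)) 0.
  have [x [nz hx]] := posdef_ker hA h0.
  rewrite h0 (@gram_sing d (1 + j) A (row_mx c Z) (col_mx 0 x)).
  - rR; rewrite Rmult_0_r; lra.
  - by rewrite col_mx_eq0 negb_and nz orbT.
  - by rewrite mul_row_col mulmx0 add0r hx.
have [x [-> e]] := schur_step c hA.1 hn.
rewrite e; have := qf_ge0 (Z *m x) hA; have := qf_ge0 (c - Z *m x) hA.
have := gram_ge0 hA Z; rR; nra.
Qed.

Lemma col_lsub d j (U : 'M[R]_(d, 1 + j)) : col ord0 U = lsubmx U.
Proof.
apply/matrixP => k l; rewrite !mxE (ord1 l); congr (U k _); exact: val_inj.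
Qed.

Lemma col_rsub d j (U : 'M[R]_(d, 1 + j)) i : col (lift ord0 i) U = col i (rsubmx U).
Proof.
apply/matrixP => k l; rewrite !mxE; congr (U k _); exact: val_inj.
Qed.

Lemma hadamard d (A : 'M[R]_d) : posdef A -> forall j (U : 'M[R]_(d, j)),
  Rle (\det (U^T *m A *m U)) (\prod_(i < j) qf A (col i U)).
Proof.
move=> hA; elim=> [|j IH] U.
  rewrite det_mx00 big_ord0; rR; lra.
rewrite big_ord_recl.
under eq_bigr do rewrite (col_rsub (U : 'M_(d, 1 + j))).
rewrite (col_lsub (U : 'M_(d, 1 + j))).
have -> : U = row_mx (lsubmx (U : 'M_(d, 1 + j))) (rsubmx (U : 'M_(d, 1 + j))) by rewrite hsubmxK.
rewrite row_mxKl row_mxKr.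
set u := lsubmx _; set U' := rsubmx _.
have := fischer u U' hA; have := IH U'; have := qf_ge0 u hA.
set P := \prod_(i < j) _ => h1 h2 h3; apply: Rle_trans h3 _; exact: Rmult_le_compat_l.
Qed.

Definition dot d (x y : 'cV[R]_d) : R := (x^T *m y) 0 0.

Lemma dotE d (x y : 'cV[R]_d) : dot x y = \sum_i x i 0 * y i 0.
Proof. by rewrite /dot mxE; apply: eq_bigr => i _; rewrite mxE. Qed.

Lemma dotC d (x y : 'cV[R]_d) : dot x y = dot y x.
Proof. by rewrite !dotE; apply: eq_bigr => i _; rewrite mulrC. Qed.

Lemma dotBl d (x y z : 'cV[R]_d) (a : R) : dot (x - a *: y) z = dot x z - a * dot y z.
Proof.
rewrite !dotE mulr_sumr -sumrB; apply: eq_bigr => i _.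
by rewrite !mxE mulrBl mulrA.
Qed.

Lemma mx11E (M : 'M[R]_1) : M = (M 0 0)%:M.
Proof. by apply/matrixP => i j; rewrite (ord1 i) (ord1 j) !mxE. Qed.

Lemma householder n (v : 'cV[R]_(1 + n)) :
  exists H : 'M[R]_(1 + n), H^T = H /\ H *m H = 1%:M /\ dsubmx (H *m v) = 0.
Proof.
pose e0 : 'cV[R]_(1 + n) := delta_mx 0 0.
have de0 : dsubmx e0 = 0.
  by apply/matrixP => i j; rewrite !mxE.
pose r := sqrt (dot v v).
have hr : r * r = dot v v.
  by apply: sqrt_sqrt; rewrite dotE; apply: sumR_ge0 => i _; rR; nra.
pose w := v - r *: e0.
have e00 : dot e0 e0 = 1.
  by rewrite dotE (bigD1 0) //= big1 => [|i hi]; rewrite !mxE ?eqxx ?(negbTE hi) ?mulr1 ?addr0 ?mulr0.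
pose c0 := v 0 0.
have ev : dot e0 v = c0.
  by rewrite dotE (bigD1 0) //= big1 => [|i hi]; rewrite !mxE ?eqxx ?(negbTE hi) ?mul1r ?addr0 ?mul0r.
have [w0|wn] := eqVneq w 0.
  exists 1%:M; split; first exact: trmx1.
  split; first by rewrite mulmx1.
  have -> : v = r *: e0 by apply/eqP; rewrite -subr_eq0 -/w w0.
  by rewrite mul1mx linearZ /= de0 scaler0.
pose q := dot w w.
have hwv : dot w v = r * r - r * c0 by rewrite dotBl ev hr.
have hq : q = (r * r - r * c0) + (r * r - r * c0).
  rewrite /q dotBl (dotC v w) hwv (dotC e0 w) dotBl (dotC v e0) ev e00; rR; ring.
have qpos : Rlt 0 q by rewrite /q /dot; apply: sq_gt0.
pose c : R := Rdiv 2 q.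
pose P := w *m w^T.
have PP : P *m P = q *: P.
  by rewrite /P mulmxA -(mulmxA w) [w^T *m w]mx11E -/(dot w w) mul_mx_scalar scalemxAl.
exists (1%:M - c *: P); split.
  by rewrite linearB /= linearZ /= trmx1 /P trmx_mul trmxK.
split.
  rewrite mulmxBl !mulmxBr !mul1mx !mulmx1 -scalemxAl -scalemxAr.
  rewrite PP !scalerA.
  have E : Rmult (Rmult c c) q = Rplus c c by rewrite /c; field; lra.
  have -> : c * c * q = c + c := E.
  by rewrite scalerDl opprB addrK subrK.
have -> : (1%:M - c *: P) *m v = v - w.
  rewrite mulmxBl mul1mx -scalemxAl /P -mulmxA [w^T *m v]mx11E -/(dot w v).
  rewrite mul_mx_scalar scalerA.
  have E : Rmult c (dot w v) = R1.
    rewrite /c hwv; move: qpos; rewrite hq.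
    set t := (r * r - r * c0); rR => tpos; field; lra.
  have -> : c * dot w v = 1 := E.
  by rewrite scale1r.
by rewrite /w opprB addrC subrK linearZ /= de0 scaler0.
Qed.

Lemma colop_det d j (A : 'M[R]_d) (t : 'cV[R]_d) (Z : 'M[R]_(d, j)) (x : 'cV[R]_j) :
  \det ((row_mx t Z)^T *m A *m row_mx t Z) =
  \det ((row_mx (t - Z *m x) Z)^T *m A *m row_mx (t - Z *m x) Z).
Proof.
pose Rm : 'M[R]_(1 + j) := block_mx 1%:M 0 (- x) 1%:M.
have hR : row_mx t Z *m Rm = row_mx (t - Z *m x) Z.
  by rewrite mul_row_block !mulmx1 mulmx0 add0r mulmxN.
have dR : \det Rm = 1 by rewrite det_lblock !det1 mulr1.
rewrite -hR trmx_mul.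
have -> : Rm^T *m (row_mx t Z)^T *m A *m (row_mx t Z *m Rm) =
  Rm^T *m ((row_mx t Z)^T *m A *m row_mx t Z) *m Rm by rewrite !mulmxA.
by rewrite !det_mulmx det_tr dR mulr1 mul1r.
Qed.

Lemma char_poly_conj n (H W : 'M[R]_n) : H *m H = 1%:M ->
  char_poly (H *m W *m H) = char_poly W.
Proof.
move=> hH; rewrite /char_poly /char_poly_mx.
set mH := map_mx (@polyC R) H.
have hmH : mH *m mH = 1%:M by rewrite -map_mxM hH map_mx1.
have -> : map_mx (@polyC R) (H *m W *m H) = mH *m map_mx (@polyC R) W *m mH.
  by rewrite !map_mxM.
have E : ('X%:M : 'M[{poly R}]_n) - mH *m map_mx (@polyC R) W *m mH =
    mH *m ('X%:M - map_mx (@polyC R) W) *m mH.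
  rewrite mulmxBr mulmxBl; congr (_ - _). rewrite -mulmxA. by rewrite -(scalar_mxC _ mH) mulmxA hmH mul1mx.
rewrite E !det_mulmx mulrC mulrA -det_mulmx hmH det1 mul1r //.
Qed.

Lemma char_poly_blockdiag m n (A : 'M[R]_m) (B : 'M[R]_n) :
  char_poly (block_mx A 0 0 B) = char_poly A * char_poly B.
Proof. by rewrite /char_poly char_block_diag_mx det_ublock. Qed.

Lemma char_poly_11 (a : R) : char_poly (a%:M : 'M[R]_1) = 'X - a%:P.
Proof. by rewrite /char_poly det_mx11 !mxE eqxx !mulr1n. Qed.

Lemma dot_col m n (x0 : 'cV[R]_m) (x' : 'cV[R]_n) :
  dot (col_mx x0 x') (col_mx x0 x') = dot x0 x0 + dot x' x'.
Proof. by rewrite /dot tr_col_mx mul_row_col mxE. Qed.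

Lemma qf_blockdiag m n (A : 'M[R]_m) (B : 'M[R]_n) (x0 : 'cV[R]_m) (x' : 'cV[R]_n) :
  qf (block_mx A 0 0 B) (col_mx x0 x') = qf A x0 + qf B x'.
Proof.
rewrite /qf tr_col_mx mul_row_block !mulmx0 addr0 add0r mul_row_col mxE //.
Qed.

Lemma gram_blockdiag m n j (A : 'M[R]_m) (B : 'M[R]_n) (Z : 'M[R]_(n, j)) :
  (col_mx 0 Z)^T *m block_mx A 0 0 B *m col_mx 0 Z = Z^T *m B *m Z.
Proof.
by rewrite tr_col_mx mul_row_block trmx0 !mul0mx !mulmx0 !add0r mul_row_col mulmx0 add0r.
Qed.

Lemma det_orth n (Hr M : 'M[R]_n) : Hr^T = Hr -> Hr *m Hr = 1%:M ->
  \det (Hr^T *m M *m Hr) = \det M.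
Proof.
move=> hT hH; rewrite !det_mulmx det_tr mulrC mulrA -det_mulmx hH det1 mul1r //.
Qed.

Lemma usub_rsub m1 m2 n1 n2 (M : 'M[R]_(m1 + m2, n1 + n2)) :
  usubmx (rsubmx M) = rsubmx (usubmx M).
Proof. by apply/matrixP => i k; rewrite !mxE. Qed.

Lemma qf_scalar n (l : R) (x : 'cV[R]_n) : qf (l%:M) x = l * dot x x.
Proof. by rewrite /qf /dot mul_mx_scalar -scalemxAl mxE. Qed.

Lemma RlebP x y : reflect (Rle x y) (Rleb x y).
Proof. by rewrite /Rleb; case: Rle_dec => h; constructor. Qed.

Lemma Rleb_trans : transitive Rleb.
Proof. move=> y x z /RlebP h1 /RlebP h2; apply/RlebP; lra. Qed.

Lemma posdef_of d (A : 'M[R]_d) (m : R) : A^T = A -> Rlt 0 m ->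
  (forall x, Rle (m * dot x x) (qf A x)) -> posdef A.
Proof.
move=> hs hm h; split => // x nz.
have := h x; have := sq_gt0 nz; rewrite -/(dot x x) -/(qf A x).
move=> h1 h2; apply: Rlt_le_trans h2; rR; nra.
Qed.

Lemma spec_bound d : forall (W : 'M[R]_d) (s : seq R),
  W^T = W -> size s = d -> sorted Rleb s -> char_poly W = \prod_(x <- s) ('X - x%:P) ->
  (forall y, y \in s -> Rlt 0 y) ->
  (forall m (x : 'cV[R]_d), (forall y, y \in s -> Rle m y) -> Rle (m * dot x x) (qf W x))
  /\ (forall j (U : 'M[R]_(d, j)), (j <= d)%N ->
       Rle ((\prod_(i < j) nth 0 s i) * \det (U^T *m U)) (\det (U^T *m W *m U))).
Proof.
elim: d => [|d IH] W s hW hs hsort hchar hpos.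
  split.
    move=> m x _; have -> : x = 0 by apply/matrixP => i; case: i.
    rewrite /dot /qf !mulmx0 !mxE; rR; rewrite Rmult_0_r; lra.
  move=> [|j] U // _; rewrite big_ord0 !det_mx00; rR; lra.
case: s hs hsort hchar hpos => [//|l s'] [hs'] hsort hchar hpos.
have hs'sort : sorted Rleb s' := path_sorted hsort.
have hmin : forall y, y \in s' -> Rle l y.
  move=> y hy; have := order_path_min Rleb_trans hsort.
  by move/allP/(_ y hy)/RlebP.
have hl : Rlt 0 l by apply: hpos; rewrite inE eqxx.
have hpos' : forall y, y \in s' -> Rlt 0 y.
  by move=> y hy; apply: hpos; rewrite inE hy orbT.
have : eigenvalue W l.
  by rewrite eigenvalue_root_char hchar big_cons rootM root_XsubC eqxx.
case/eigenvalueP => v0 hv0 nz0.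
pose v := v0^T.
have hv : W *m v = l *: v.
  by rewrite /v -{1}hW -trmx_mul hv0 linearZ.
have vnz : v != 0 by rewrite trmx_eq0.
have [H [hHT [hHH hHv]]] := householder (v : 'cV_(1 + d)).
pose W1 := H *m W *m H.
have hWH : W = H *m W1 *m H.
  by rewrite /W1 !mulmxA hHH mul1mx -mulmxA hHH mulmx1.
have hW1T : W1^T = W1 by rewrite /W1 !trmx_mul hHT hW mulmxA.
pose p := H *m v.
have hp : W1 *m p = l *: p.
  rewrite /W1 /p -!mulmxA [H *m (H *m v)]mulmxA hHH mul1mx hv.
  by rewrite -scalemxAr.
have pnz : p != 0.
  apply: contra vnz => /eqP hp0; apply/eqP.
  by rewrite -[v]mul1mx -hHH -mulmxA -/p hp0 mulmx0.
set pu := usubmx (p : 'cV_(1 + d)).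
have hpe : p = col_mx pu 0 by rewrite -hHv vsubmxK.
have pu00 : pu 0 0 != 0.
  apply: contra pnz => /eqP h0; apply/eqP.
  by rewrite hpe [pu]mx11E h0 -scalemx1 scale0r col_mx0.
have hblk : W1 = block_mx (l%:M) 0 0 (drsubmx (W1 : 'M_(1 + d))).
  have hW1 := submxK (W1 : 'M_(1 + d)).
  move: hp; rewrite hpe -{1}hW1 mul_block_col !mulmx0 !addr0 scale_col_mx scaler0.
  case/eq_col_mx => ha hc.
  have hC : dlsubmx (W1 : 'M_(1 + d)) = 0.
    move: hc; rewrite [pu]mx11E mul_mx_scalar => /eqP.
    rewrite scaler_eq0 (negbTE pu00) /= => /eqP //.
  have hA : ulsubmx (W1 : 'M_(1 + d)) = l%:M.
    move: ha; rewrite [pu]mx11E mul_mx_scalar.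
    have -> : l *: (pu 0 0)%:M = pu 0 0 *: (l%:M : 'M_1) by rewrite !scale_scalar_mx mulrC.
    move/eqP; rewrite -subr_eq0 -scalerBr scaler_eq0 (negbTE pu00) /= subr_eq0 => /eqP //.
  have hB : ursubmx (W1 : 'M_(1 + d)) = 0.
    by rewrite -hW1T -trmx_dlsub hC trmx0.
  by rewrite -{1}hW1 hA hB hC.
set W' := drsubmx _ in hblk.
have hW'T : W'^T = W'.
  by rewrite /W' trmx_drsub hW1T.
have hchar' : char_poly W' = \prod_(x <- s') ('X - x%:P).
  have := char_poly_conj W hHH; rewrite -/W1 hblk (char_poly_blockdiag (l%:M : 'M_1) W') char_poly_11.
  rewrite hchar big_cons => /(mulfI _); apply; by rewrite polyXsubC_eq0.
have [IHa IHb] := IH W' s' hW'T hs' hs'sort hchar' hpos'.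
have haW1 : forall m (x : 'cV[R]_(1 + d)), (forall y, y \in l :: s' -> Rle m y) ->
    Rle (m * dot x x) (qf W1 x).
  move=> m x hm; rewrite -(vsubmxK x) hblk qf_blockdiag dot_col qf_scalar.
  have h1 := IHa m (dsubmx x) (fun y hy => hm y (ltac:(by rewrite inE hy orbT))).
  have h2 : Rle m l by apply: hm; rewrite inE eqxx.
  have h3 := sq_ge0 (usubmx x); rewrite -/(dot _ _) in h3.
  move: h1 h2 h3; rR => h1 h2 h3; nra.
have hdotH : forall x : 'cV[R]_(1 + d), dot (H *m x) (H *m x) = dot x x.
  by move=> x; rewrite /dot trmx_mul hHT mulmxA -(mulmxA x^T) hHH mulmx1.
have pdW1 : posdef W1.
  apply: (posdef_of hW1T hl) => x; apply: haW1 => y hy; rewrite inE in hy.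
  by case/orP: hy => [/eqP ->|hy]; [exact: Rle_refl | exact: hmin].
have pdW' : posdef W'.
  by apply: (posdef_of hW'T hl) => x; apply: IHa.
split.
  move=> m x hm; have := haW1 m (H *m x) hm; by rewrite hdotH qf_mul hHT -hWH.
move=> [|j] U hj.
  rewrite big_ord0 !det_mx00; rR; lra.
pose Y : 'M[R]_(1 + d, 1 + j) := H *m U.
have e1 : U^T *m U = Y^T *m Y.
  by rewrite /Y trmx_mul hHT mulmxA -(mulmxA U^T) hHH mulmx1.
have e2 : U^T *m W *m U = Y^T *m W1 *m Y.
  by rewrite hWH /Y trmx_mul hHT !mulmxA.
pose yr : 'cV[R]_(1 + j) := (usubmx Y)^T.
have [Hr [hHrT [hHrH hHry]]] := householder yr.
pose T : 'M[R]_(1 + d, 1 + j) := Y *m Hr.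
have eT1 : \det (Y^T *m Y) = \det (T^T *m 1%:M *m T).
  by rewrite mulmx1 -(det_orth _ hHrT hHrH) /T [(Y *m Hr)^T]trmx_mul !mulmxA.
have eT2 : \det (Y^T *m W1 *m Y) = \det (T^T *m W1 *m T).
  by rewrite -(det_orth _ hHrT hHrH) /T [(Y *m Hr)^T]trmx_mul !mulmxA.
have hT0 : rsubmx (usubmx T) = 0.
  rewrite /T -mul_usub_mx -[usubmx Y *m Hr]trmxK trmx_mul -trmx_dsub hHrT.
  by rewrite -/yr hHry trmx0.
set t := lsubmx T; set Z0 := rsubmx T; set Z := dsubmx (Z0 : 'M_(1 + d, j)).
have hZ0 : Z0 = col_mx 0 Z.
  by rewrite -[Z0]vsubmxK /Z0 usub_rsub hT0.
have hT : T = row_mx t Z0 by rewrite hsubmxK.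
have eW : Z0^T *m W1 *m Z0 = Z^T *m W' *m Z by rewrite hZ0 hblk gram_blockdiag.
have eI : Z0^T *m 1%:M *m Z0 = Z^T *m Z.
  by rewrite hZ0 mulmx1 tr_col_mx mul_row_col trmx0 mul0mx add0r.
have hj' : (j <= d)%N by [].
rewrite big_ord_recl.
under eq_bigr do rewrite lift0 /=.
have hP : Rlt 0 (\prod_(i < j) nth 0 s' i).
  apply: prodR_gt0 => i _; apply: hpos'; apply: mem_nth; rewrite hs'; exact: leq_trans (ltn_ord i) hj'.
have hG0 := gram_ge0 (posdef1 d) Z; rewrite mulmx1 in hG0.
have hIH := IHb j Z hj'.
have [h0|hn] := eqVneq (\det (Z^T *m W' *m Z)) 0.
  have [x [nz hx]] := posdef_ker pdW' h0.
  have hTx : T *m col_mx 0 x = 0.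
    by rewrite hT mul_row_col mulmx0 add0r hZ0 mul_col_mx mul0mx hx col_mx0.
  have nz2 : col_mx 0 x != 0 :> 'cV[R]_(1 + j) by rewrite col_mx_eq0 negb_and nz orbT.
  rewrite e1 eT1 (gram_sing 1%:M nz2 hTx) e2.
  have := gram_ge0 pdW1 Y; rR; rewrite Rmult_0_r; exact.
have hn' : \det (Z0^T *m W1 *m Z0) != 0 by rewrite eW.
have [x [hdet _]] := schur_step t hW1T hn'.
set c := t - Z0 *m x in hdet.
have hF : Rle (\det (T^T *m 1%:M *m T)) (dot c c * \det (Z^T *m Z)).
  rewrite hT (colop_det _ _ _ x) -/c -eI.
  have := fischer c Z0 (posdef1 (1 + d)); by rewrite /qf /dot !mulmx1.
have hq := haW1 l c (fun y hy => ltac:(rewrite inE in hy; case/orP: hy => [/eqP ->|hy]; [exact: Rle_refl | exact: hmin])).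
have hc0 := sq_ge0 c; rewrite -/(dot c c) in hc0.
have E1 : \det (U^T *m U) = \det (T^T *m 1%:M *m T) by rewrite e1 eT1.
have E2 : \det (U^T *m W *m U) = qf W1 c * \det (Z^T *m W' *m Z).
  by rewrite e2 eT2 hT hdet eW.
rewrite E1 E2.
move: hP hl hG0 hIH hF hq hc0.
rewrite [nth _ _ _]/=.
set P' := \prod_(i < j) _; set D1 := \det (T^T *m 1%:M *m T); set G := \det (Z^T *m Z).
set D' := \det (Z^T *m W' *m Z); set cc := dot c c; set qc := qf W1 c.
rR => hP hl hG0 hIH hF hq hc0.
have h1 : Rle (l * P' * D1) (l * P' * (cc * G)) by apply: Rmult_le_compat_l; nra.
have h2 : Rle ((l * cc) * (P' * G)) (qc * (P' * G)) by apply: Rmult_le_compat_r; nra.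
have h3 : Rle (qc * (P' * G)) (qc * D') by apply: Rmult_le_compat_l; nra.
nra.
Qed.

Lemma exp_sum_ln (F : nat -> R) j : (forall i, (i < j)%N -> Rlt 0 (F i)) ->
  exp (\sum_(i < j) ln (F i)) = \prod_(i < j) F i.
Proof.
elim: j => [|j IH] h.
  by rewrite !big_ord0 exp_0.
rewrite !big_ord_recr /= -IH; last by move=> i hi; apply: h; apply: leqW.
rewrite -[RHS]/(Rmult _ _) -[(_ + _)%R]/(Rplus _ _) exp_plus exp_ln //.
exact: h.
Qed.

Unset Implicit Arguments.
Set Strict Implicit.

Theorem lemma4p2 (d n j : nat) (V : 'M[R]_(d, n)) (mu : R) :
  \rank V = d ->
  (1 <= j <= d)%N ->
  is_inf (objective_values j V) mu ->
  Rle (msd j (V^T *m V)) (exp mu).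
Proof.
move=> _ /andP[_ hjd] [_ hinf].
have key : forall x, objective_values j V x -> Rle (msd j (V^T *m V)) (exp x).
  move=> x [W [pdW [hdiag [s [[hsz [hsort hchar]] ->]]]]].
  have hpos : forall y, y \in s -> Rlt 0 y.
    move=> y hy.
    have : eigenvalue W y by rewrite eigenvalue_root_char hchar root_prod_XsubC.
    case/eigenvalueP => v0 hv0 nz.
    have nz' : v0^T != 0 by rewrite trmx_eq0.
    have h1 := pdW.2 _ nz'; rewrite trmxK hv0 -scalemxAl mxE in h1.
    have h2 := sq_gt0 nz'; rewrite trmxK in h2.
    move: h1 h2; rR => h1 h2; nra.
  have [_ hb] := spec_bound pdW.1 hsz hsort hchar hpos.
  have hP : Rlt 0 (\prod_(i < j) nth 0 s i).
    apply: prodR_gt0 => i _; apply: hpos; apply: mem_nth; rewrite hsz.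
    exact: leq_trans (ltn_ord i) hjd.
  have hx : exp (Ropp (\sum_(i < j) ln (nth 0 s i))) = Rinv (\prod_(i < j) nth 0 s i).
    rewrite exp_Ropp exp_sum_ln // => i hi; apply: hpos; apply: mem_nth.
    by rewrite hsz; exact: leq_trans hi hjd.
  rewrite hx /msd.
  apply: (big_ind (fun z => Rle z (Rinv (\prod_(i < j) nth 0 s i)))).
  - rR; apply: Rlt_le; exact: Rinv_0_lt_compat.
  - by move=> a b ha hb'; apply: Rmax_lub.
  move=> S /eqP hS.
  set f := @enum_val _ (mem S).
  set U := colsub f V.
  have eU : principal_submx (V^T *m V) S = U^T *m U.
    by rewrite /principal_submx mxsub_mul /U trmx_mxsub.
  rewrite eU.
  have hSd : (#|S| <= d)%N by rewrite hS.
  have h1 := hb _ U hSd.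
  have h2 := hadamard pdW U.
  have h3 : Rle (\prod_(i < #|S|) qf W (col i U)) 1.
    have hF : forall i : 'I_#|S|, xpredT i -> Rle 0 (qf W (col i U)) /\ Rle (qf W (col i U)) 1.
      move=> i _; split; first exact: qf_ge0.
      rewrite /U col_colsub; exact: hdiag.
    have [_ hpr] := @prodR_le _ (index_enum 'I_#|S|) xpredT (fun i => qf W (col i U)) (fun _ => 1) hF.
    by move: hpr; rewrite big1_eq.
  have eP : \prod_(i < #|S|) nth 0 s i = \prod_(i < j) nth 0 s i.
    by rewrite -!(big_mkord xpredT) hS.
  rewrite eP in h1.
  move: h1 h2 h3 hP; set P := \prod_(i < j) _; set D := \det _; set D' := \det _; set Q := \prod_(i < _) _.
  rR => h1 h2 h3 hP.
  apply: (Rmult_le_reg_l P) => //; rewrite Rinv_r; [nra | lra].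
have [hm|hm] := Rle_or_lt (msd j (V^T *m V)) 0.
  by apply: Rle_trans hm _; apply: Rlt_le; apply: exp_pos.
have hl : Rle (ln (msd j (V^T *m V))) mu.
  apply: hinf => x hx.
  have := key x hx => hk.
  case: (Rle_or_lt (ln (msd j (V^T *m V))) x) => // hlt.
  have := exp_increasing _ _ hlt; rewrite exp_ln //; lra.
rewrite -[msd _ _]exp_ln //.
case: (Rle_lt_or_eq_dec _ _ hl) => [h|->]; last exact: Rle_refl.
exact/Rlt_le/exp_increasing.
Qed.
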